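(* Let $r\in(0,1)$, $k\geq1$ an integer, $\beta\in(0,1)$, and $\gamma, C$ real. Let $W_1,W_2,\dots$ be i.i.d.\ copies of a positive random variable $W$ (an i.i.d.\ multiplicative cascade with scale ratio $r$) whose scaling exponents, defined by $\mathbb{E}[W^p]=r^{\zeta_p}$, satisfy $\zeta_p=\gamma p+C(1-\beta^{p/k})$. Then the distribution of $W$ is uniquely determined by its moments. *)

(* Defs.v *)
From HB Require Import structures.
From mathcomp Require Import all_boot all_order all_algebra.
From mathcomp Require Import all_classical all_reals all_analysis.
Set Implicit Arguments. Unset Strict Implicit. Unset Printing Implicit Defensive.
Import Order.TTheory GRing.Theory Num.Theory.
Local Open Scope classical_set_scope.
Local Open Scope ring_scope.

Definition zeta_exp (R : realType) (gamma C beta : R) (k : nat) (p : R) : R :=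
  gamma * p + C * (1 - beta `^ (p / k%:R)).

Definition determined_by_moments (R : realType) d (T : measurableType d)
  (P : probability T R) (W : T -> R) : Prop :=
  forall d' (T' : measurableType d') (P' : probability T' R) (V : T' -> R),
    measurable_fun setT V ->
    (forall n : nat, P'.-integrable setT (fun x => ((V x) ^+ n)%:E) /\
       (\int[P']_x ((V x) ^+ n)%:E = \int[P]_x ((W x) ^+ n)%:E)%E) ->
    forall A : set R, measurable A -> P (W @^-1` A) = P' (V @^-1` A).

(* Main.v *)
Require Import Defs.
From HB Require Import structures.
From mathcomp Require Import all_boot all_order all_algebra.
From mathcomp Require Import all_classical all_reals all_analysis.
From mathcomp Require Import measurable_realfun.
From mathcomp.algebra_tactics Require Import ring lra.
Import Order.TTheory GRing.Theory Num.Theory.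
Import numFieldNormedType.Exports.
Local Open Scope classical_set_scope.
Local Open Scope ring_scope.

Section S.
Variable R : realType.

Lemma dc_eq d (T : measurableType d) (P : probability T R) d' (T' : measurableType d') (P' : probability T' R)
  (X : T -> R) (Y : T' -> R) (L B : R) (fn : nat -> R -> R) (f : R -> R) :
 measurable_fun setT X -> measurable_fun setT Y ->
 (forall n, measurable_fun setT (fn n)) -> measurable_fun setT f ->
 {ae P, forall x, `|X x| <= L} -> {ae P', forall x, `|Y x| <= L} ->
 (forall x, `|x| <= L -> fn ^~ x @ \oo --> f x) ->
 (forall n x, `|x| <= L -> `|fn n x| <= B) ->
 (forall n, \int[P]_x (fn n (X x))%:E = \int[P']_x (fn n (Y x))%:E)%E ->
 (\int[P]_x (f (X x))%:E = \int[P']_x (f (Y x))%:E)%E.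
Proof.
move=> mX mY mfn mf aX aY cv bd eqn.
have gen d0 (T0 : measurableType d0) (Q : probability T0 R) (Z : T0 -> R) :
  measurable_fun setT Z -> {ae Q, forall x, `|Z x| <= L} ->
  ((fun n => \int[Q]_x (fn n (Z x))%:E) @ \oo --> \int[Q]_x (f (Z x))%:E)%E.
  move=> mZ aZ.
  have m1 : forall n, measurable_fun setT (EFin \o (fn n \o Z)).
    by move=> n; apply/measurable_EFinP; apply: measurableT_comp.
  have m2 : measurable_fun setT (EFin \o (f \o Z)).
    by apply/measurable_EFinP; apply: measurableT_comp.
  have m3 : {ae Q, forall x, setT x -> (fun n => (fn n (Z x))%:E)%E @ \oo --> (f (Z x))%:E}%E.
    apply: filterS aZ => x Zx _; apply: cvg_EFin; first exact: nearW.
    exact: cv.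
  have m4 : Q.-integrable setT (fun _ => B%:E)%E.
    exact: finite_measure_integrable_cst.
  have m5 : {ae Q, forall x n, setT x -> (`|(fn n (Z x))%:E| <= B%:E)%E}.
    by apply: filterS aZ => x Zx n _; rewrite /= lee_fin; apply: bd.
  by case: (dominated_convergence measurableT m1 m2 m3 m4 m5).
have h1 := gen _ _ P X mX aX.
have h2 := gen _ _ P' Y mY aY.
have e : (fun n => \int[P]_x (fn n (X x))%:E)%E = (fun n => \int[P']_x (fn n (Y x))%:E)%E.
  by apply: funext => n /=; rewrite eqn.
rewrite e in h1.
exact: (cvg_unique _ h1 h2).
Qed.

Lemma poly_int d (T : measurableType d) (P : probability T R) (X : T -> R) :
  (forall n, P.-integrable setT (fun x => (X x ^+ n)%:E)) ->
  forall (a : nat -> R) n, P.-integrable setT (fun x => (\sum_(i < n) a i * X x ^+ i)%:E) /\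
   (\int[P]_x (\sum_(i < n) a i * X x ^+ i)%:E = \sum_(i < n) (a i)%:E * \int[P]_x (X x ^+ i)%:E)%E.
Proof.
move=> hX a; elim=> [|n [IH1 IH2]].
  under eq_fun do rewrite big_ord0.
  rewrite big_ord0; split; first exact: finite_measure_integrable_cst.
  by rewrite integral0.
have hi : P.-integrable setT (fun x => (a n)%:E * (X x ^+ n)%:E)%E.
  exact: integrableZl.
have e : (fun x => (\sum_(i < n.+1) a i * X x ^+ i)%:E) =
   ((fun x => (\sum_(i < n) a i * X x ^+ i)%:E) \+ (fun x => (a n)%:E * (X x ^+ n)%:E))%E.
  by apply: funext => x; rewrite big_ord_recr /= EFinD EFinM.
rewrite e; split; first exact: integrableD.
rewrite integralD // IH2 integralZl // big_ord_recr.
by [].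
Qed.

Lemma poly_eq d (T : measurableType d) (P : probability T R) d' (T' : measurableType d') (P' : probability T' R)
  (X : T -> R) (Y : T' -> R) :
  (forall n, P.-integrable setT (fun x => (X x ^+ n)%:E)) ->
  (forall n, P'.-integrable setT (fun x => (Y x ^+ n)%:E)) ->
  (forall n, \int[P]_x (X x ^+ n)%:E = \int[P']_x (Y x ^+ n)%:E)%E ->
  forall p : {poly R}, (\int[P]_x (p.[X x])%:E = \int[P']_x (p.[Y x])%:E)%E.
Proof.
move=> hX hY e p.
under eq_integral => x _ do rewrite horner_coef.
under [RHS]eq_integral => x _ do rewrite horner_coef.
have [_ ->] := @poly_int _ _ P X hX (fun i => p`_i) (size p).
have [_ ->] := @poly_int _ _ P' Y hY (fun i => p`_i) (size p).
by apply: eq_bigr => i _; rewrite e.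
Qed.

Lemma zero_of_bound (p K0 : R) : 0 <= p -> (forall n : nat, 4 ^+ n * p <= K0) -> p = 0.
Proof.
move=> p0 h; apply/eqP; rewrite eq_le p0 andbT; rewrite leNgt; apply/negP => pp.
pose n := Num.bound (K0 / p).
have h1 : K0 / p < n%:R.
  have [k0|k0] := lerP 0 (K0 / p); first exact: archi_boundP.
  by apply: lt_le_trans k0 _; rewrite ler0n.
have h2 : (n%:R : R) <= 4 ^+ n.
  elim: n {h1} => // k IH; rewrite exprS -natr1.
  have : 1 <= (4 : R) ^+ k by rewrite exprn_ege1 // ler1n.
  move=> h3; nra.
have := h n; rewrite ltr_pdivrMr // in h1; nra.
Qed.

Lemma bnd d (T : measurableType d) (P : probability T R) (X : T -> R) (K0 M : R) :
  measurable_fun setT X -> 0 < M ->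
  (forall n, (\int[P]_x (X x ^+ (2*n))%:E <= (K0 * M ^+ (2*n))%:E)%E) ->
  {ae P, forall x, `|X x| <= 2 * M}.
Proof.
move=> mX M0 hb.
pose A := setT `&` [set x | ((2*M)%:E <= `|(X x)%:E|)%E].
have mA : measurable A.
  apply: emeasurable_fun_c_infty => //; apply: measurableT_comp => //.
  exact/measurable_EFinP.
have key : forall n, (((2*M)^+(2*n))%:E * P A <= (K0 * M^+(2*n))%:E)%E.
  move=> n; apply: le_trans (hb n).
  have := @le_integral_comp_abse _ _ _ P setT measurableT (EFin \o X) (2*M)
     (er_map (fun r => r ^+ (2*n))) (@measurable_er_map _ T _ _ (@exprn_measurable _ setT (2*n))).
  move=> /(_ _ _ (proj2 (measurable_EFinP _ _) mX)).
  have i1 : forall r : \bar R, (0%R <= r)%E -> (0%R <= er_map (fun r : R => (r ^+ (2*n))%R) r)%E.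
    by case => //= r r0; rewrite lee_fin exprn_ge0.
  have i3 : 0 < 2 * M by rewrite mulr_gt0.
  move=> H.
  have -> : (\int[P]_x (X x ^+ (2*n))%:E = \int[P]_x er_map (fun r : R => (r ^+ (2 * n))%R) `|(EFin \o X) x|)%E.
    apply: eq_integral => x _ /=.
    by rewrite -normrX ger0_norm // exprM exprn_ge0 // sqr_ge0.
  apply: (H i1 _ i3).
  move=> [x| |] [y| |]; rewrite !inE/= !in_itv/= ?andbT ?lee_fin ?leey// => x0 y0 xy.
  by rewrite lerXn2r.
have PA0 : P A = 0%E.
  have fA : P A \is a fin_num.
    by rewrite ge0_fin_numE ?measure_ge0 // (le_lt_trans (probability_le1 P mA)) // ltry.
  rewrite -(fineK fA); congr (_%:E).
  apply: (@zero_of_bound _ K0); first by rewrite fine_ge0 // measure_ge0.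
  move=> n; have := key n; rewrite -(fineK fA) -EFinM lee_fin.
  rewrite /=; set p := fine (P A); move=> h.
  have e : (2*M)^+(2*n) = 4^+n * M^+(2*n).
    by rewrite exprMn exprM; congr (_ ^+ _ * _); rewrite expr2 -natrM.
  have Mp : 0 < M^+(2*n) by rewrite exprn_gt0.
  rewrite e in h; set a := 4^+n in h *; set b := M ^+ (2*n) in h Mp.
  nra.
exists A; split => //.
move=> x /= hx; split => //=; rewrite lee_fin; apply: ltW; rewrite ltNge; exact/negP.
Qed.

Fixpoint pn (n : nat) (u : R) : R :=
  if n is m.+1 then pn m u + (u ^+ 2 - (pn m u) ^+ 2) / 2 else 0.

Lemma pn_bounds n u : `|u| <= 1 -> 0 <= pn n u <= `|u|.
Proof.
move=> hu; elim: n => [|n /andP[h0 h1]] /=; first by rewrite lexx normr_ge0.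
have e : u ^+ 2 = `|u| ^+ 2 by rewrite real_normK // num_real.
rewrite e; set a := `|u| in hu h1 e *; set p := pn n u in h0 h1 *.
have a0 : 0 <= a by rewrite normr_ge0.
apply/andP; split; nra.
Qed.

Lemma pn_err n u : `|u| <= 1 -> `|u| - pn n u <= `|u| * (1 - `|u| / 2) ^+ n.
Proof.
move=> hu; elim: n => [|n IH] /=; first by rewrite subr0 expr0 mulr1.
have /andP[h0 h1] := pn_bounds n u hu.
have e : u ^+ 2 = `|u| ^+ 2 by rewrite real_normK // num_real.
rewrite e [(1 - _) ^+ n.+1]exprSr; set a := `|u| in hu h1 e IH *; set p := pn n u in h0 h1 IH *.
set q := (1 - a / 2) ^+ n in IH *.
have a0 : 0 <= a by rewrite normr_ge0.
have q0 : 0 <= q by rewrite /q exprn_ge0 //; lra.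
have h3 : 0 <= (a - p) * p by apply: mulr_ge0; lra.
have h4 : 0 <= (a * q - (a - p)) * (1 - a / 2) by apply: mulr_ge0; lra.
nra.
Qed.

Lemma pn_cvg u : `|u| <= 1 -> (fun n => pn n u) @ \oo --> `|u|.
Proof.
move=> hu; have [u0|u0] := eqVneq u 0; first subst u.
  apply: cvg_near_cst; apply: nearW => n.
  have := pn_bounds n 0 hu; rewrite normr0 => /andP[h0 h1].
  by apply/eqP; rewrite eq_le h0 h1.
apply: (@squeeze_cvgr _ _ _ _ (fun n => `|u| - geometric `|u| (1 - `|u|/2) n) (cst `|u|)).
- apply: nearW => n; have := pn_err n u hu; have := pn_bounds n u hu; rewrite /geometric /=.
  move=> /andP[h0 h1] h2; apply/andP; split => //; lra.
- rewrite -[X in _ --> X]subr0; apply: cvgB; first exact: cvg_cst.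
  apply: cvg_geometric.
  have a0 : 0 < `|u| by rewrite normr_gt0.
  rewrite ger0_norm; lra.
- exact: cvg_cst.
Qed.

Fixpoint Pc (c K : R) (n : nat) : {poly R} :=
  if n is m.+1 then Pc c K m + ((('X - c%:P) * (K^-1)%:P) ^+ 2 - (Pc c K m) ^+ 2) * (2^-1)%:P
  else 0.

Lemma Pc_eval c K n x : (Pc c K n).[x] = pn n ((x - c) / K).
Proof.
elim: n => [|n IH] /=; first by rewrite horner0.
by rewrite !hornerE IH.
Qed.

Definition hh (t : R) (m : nat) (x : R) : R :=
  (m.+1%:R / 2) * (`|x - t| - `|x - (t - m.+1%:R^-1)|) + 2^-1.

Lemma hh_bound t m x : `|hh t m x| <= 1.
Proof.
rewrite /hh; set a : R := m.+1%:R.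
have a0 : 0 < a by rewrite ltr0n.
have h1 : `| `|x - t| - `|x - (t - a^-1)| | <= a^-1.
  apply: le_trans (ler_dist_dist _ _) _.
  have -> : x - t - (x - (t - a^-1)) = - a^-1 by ring.
  by rewrite normrN ger0_norm // invr_ge0 ltW.
apply: le_trans (ler_normD _ _) _.
rewrite normrM (@ger0_norm _ (a / 2)); last by rewrite divr_ge0 // ltW.
rewrite (@ger0_norm _ (2^-1)); last by rewrite invr_ge0.
have : a / 2 * `| `|x - t| - `|x - (t - a^-1)| | <= a / 2 * a^-1.
  by rewrite ler_wpM2l // divr_ge0 // ltW.
have -> : a / 2 * a^-1 = 2^-1 by field; rewrite gt_eqF.
lra.
Qed.

Lemma hh_cvg t x : (fun m => hh t m x) @ \oo --> (\1_(`]-oo, t[) x : R).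
Proof.
rewrite indicE.
have [xt|tx] := ltP x t.
  have -> : (x \in `]-oo, t[%classic) = true.
    by apply/mem_set; rewrite /= in_itv /= xt.
  apply: cvg_near_cst.
  pose N := Num.bound ((t - x)^-1).
  exists N => // n /= hn.
  have tx0 : 0 < t - x by rewrite subr_gt0.
  have a0 : 0 < (n.+1%:R : R) by rewrite ltr0n.
  have hN : (t - x)^-1 < n.+1%:R.
    have [k0|k0] := lerP 0 ((t - x)^-1).
      apply: lt_le_trans (archi_boundP k0) _; rewrite ler_nat; apply: leq_trans hn _; exact: leqnSn.
    by apply: lt_trans k0 _.
  have ha : (n.+1%:R : R)^-1 < t - x by rewrite -invf_plt // ?invr_gt0.
  rewrite /hh (@ler0_norm _ (x - t)); last by rewrite subr_le0 ltW.
  rewrite (@ler0_norm _ (x - (t - _))); last by rewrite subr_le0; move: ha; set b := (_^-1); lra.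
  by field; rewrite gt_eqF.
have -> : (x \in `]-oo, t[%classic) = false.
  by apply/negbTE/negP; move/set_mem; rewrite /= in_itv /= ltNge tx.
apply: cvg_near_cst; apply: nearW => n.
have a0 : 0 < (n.+1%:R : R) by rewrite ltr0n.
have b0 : 0 < (n.+1%:R : R)^-1 by rewrite invr_gt0.
rewrite /hh (@ger0_norm _ (x - t)); last by rewrite subr_ge0.
rewrite (@ger0_norm _ (x - (t - _))); last by rewrite subr_ge0; move: b0; set b := (_^-1); lra.
rewrite [RHS]/=.
by field; rewrite gt_eqF.
Qed.

Definition Hp (t : R) (m : nat) (K : R) (n : nat) : {poly R} :=
  ((m.+1%:R / 2 * K)%:P) * (Pc t K n - Pc (t - m.+1%:R^-1) K n) + (2^-1)%:P.

Lemma Hp_eval t m K n x : (Hp t m K n).[x] =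
  m.+1%:R / 2 * K * (pn n ((x - t) / K) - pn n ((x - (t - m.+1%:R^-1)) / K)) + 2^-1.
Proof. by rewrite /Hp !hornerE !Pc_eval. Qed.

Lemma Hp_cvg t m K x : 0 < K -> `|x - t| <= K -> `|x - (t - m.+1%:R^-1)| <= K ->
  (fun n => (Hp t m K n).[x]) @ \oo --> hh t m x.
Proof.
move=> K0 h1 h2.
have u1 : `|(x - t) / K| <= 1 by rewrite normrM (@gtr0_norm _ K^-1) ?invr_gt0 // ler_pdivrMr // mul1r.
have u2 : `|(x - (t - m.+1%:R^-1)) / K| <= 1 by rewrite normrM (@gtr0_norm _ K^-1) ?invr_gt0 // ler_pdivrMr // mul1r.
under eq_fun do rewrite Hp_eval.
have -> : hh t m x = m.+1%:R / 2 * K * (`|(x - t) / K| - `|(x - (t - m.+1%:R^-1)) / K|) + 2^-1.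
  rewrite /hh !normrM (@gtr0_norm _ K^-1); last by rewrite invr_gt0.
  by field; rewrite gt_eqF.
apply: cvgD; last exact: cvg_cst.
apply: cvgMl_tmp; apply: cvgB; exact: pn_cvg.
Qed.

Lemma Hp_bound t m K n x : 0 < K -> `|x - t| <= K -> `|x - (t - m.+1%:R^-1)| <= K ->
  `|(Hp t m K n).[x]| <= m.+1%:R / 2 * K + 1.
Proof.
move=> K0 h1 h2.
have u1 : `|(x - t) / K| <= 1 by rewrite normrM (@gtr0_norm _ K^-1) ?invr_gt0 // ler_pdivrMr // mul1r.
have u2 : `|(x - (t - m.+1%:R^-1)) / K| <= 1 by rewrite normrM (@gtr0_norm _ K^-1) ?invr_gt0 // ler_pdivrMr // mul1r.
rewrite Hp_eval.
have /andP[a0 a1] := pn_bounds n _ u1.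
have /andP[b0 b1] := pn_bounds n _ u2.
set p := pn n _ in a0 a1 *; set q := pn n _ in b0 b1 *.
have c0 : 0 <= m.+1%:R / 2 * K :> R by rewrite mulr_ge0 // ?divr_ge0 // ltW.
set c := m.+1%:R / 2 * K in c0 *.
apply: le_trans (ler_normD _ _) _.
rewrite normrM (ger0_norm c0) (@ger0_norm _ (2^-1)); last by rewrite invr_ge0.
have : `|p - q| <= 1.
  rewrite ler_norml; apply/andP; split; lra.
move=> hpq.
have : c * `|p - q| <= c by rewrite -[X in _ <= X]mulr1 ler_wpM2l.
have : (2^-1 : R) <= 1 by rewrite invf_le1 // ler1n.
lra.
Qed.



Lemma hh_meas t m : measurable_fun setT (hh t m).
Proof.
have -> : hh t m = (cst (m.+1%:R / 2) \* (((fun y : R => `|y|) \o (fun x => x - t)) \- ((fun y : R => `|y|) \o (fun x => x - (t - m.+1%:R^-1))))) \+ cst (2^-1).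
  by apply: funext => x.
apply: measurable_funD; last exact: measurable_cst.
apply: measurable_funM; first exact: measurable_cst.
apply: measurable_funB; apply: measurableT_comp; try exact: normr_measurable;
  apply: measurable_funB; try exact: measurable_id; exact: measurable_cst.
Qed.

Lemma core d (T : measurableType d) (P : probability T R) d' (T' : measurableType d') (P' : probability T' R)
  (X : T -> R) (Y : T' -> R) (L : R) :
  measurable_fun setT X -> measurable_fun setT Y ->
  {ae P, forall x, `|X x| <= L} -> {ae P', forall x, `|Y x| <= L} ->
  (forall n, P.-integrable setT (fun x => (X x ^+ n)%:E)) ->
  (forall n, P'.-integrable setT (fun x => (Y x ^+ n)%:E)) ->
  (forall n, \int[P]_x (X x ^+ n)%:E = \int[P']_x (Y x ^+ n)%:E)%E ->
  forall t, P (X @^-1` `]-oo, t[) = P' (Y @^-1` `]-oo, t[).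
Proof.
move=> mX mY aX aY iX iY eXY t.
have step1 : forall m, (\int[P]_x (hh t m (X x))%:E = \int[P']_x (hh t m (Y x))%:E)%E.
  move=> m; pose K := `|L| + `|t| + 2.
  have K0 : 0 < K by rewrite /K; have := normr_ge0 L; have := normr_ge0 t; lra.
  have hK : forall x, `|x| <= L -> `|x - t| <= K /\ `|x - (t - m.+1%:R^-1)| <= K.
    move=> x hx; have hL : L <= `|L| := ler_norm L.
    have hinv : `|(m.+1%:R : R)^-1| <= 1.
      by rewrite ger0_norm ?invr_ge0 // invf_le1 // ler1n.
    split.
      apply: le_trans (ler_normB _ _) _; rewrite /K; lra.
    apply: le_trans (ler_normB _ _) _; apply: le_trans (lerD (lexx _) (ler_normB _ _)) _.
    rewrite /K; lra.
  apply: (@dc_eq _ _ P _ _ P' X Y L (m.+1%:R / 2 * K + 1) (fun n x => (Hp t m K n).[x])) => //.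
  - by move=> n; exact: measurable_poly.
  - exact: hh_meas.
  - by move=> x hx; have [h1 h2] := hK x hx; exact: Hp_cvg.
  - by move=> n x hx; have [h1 h2] := hK x hx; exact: Hp_bound.
  - by move=> n; exact: poly_eq.
have step2 : (\int[P]_x (\1_(`]-oo, t[) (X x) : R)%:E = \int[P']_x (\1_(`]-oo, t[) (Y x) : R)%:E)%E.
  apply: (@dc_eq _ _ P _ _ P' X Y L 1 (hh t)) => //.
  - exact: hh_meas.
  - by move=> x _; exact: hh_cvg.
  - by move=> n x _; exact: hh_bound.
have e1 : forall d0 (T0 : measurableType d0) (Q : probability T0 R) (Z : T0 -> R),
   measurable_fun setT Z ->
   (\int[Q]_x (\1_(`]-oo, t[) (Z x) : R)%:E = Q (Z @^-1` `]-oo, t[))%E.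
  move=> d0 T0 Q Z mZ.
  have mA : measurable (Z @^-1` `]-oo, t[).
    by rewrite -[X in measurable X]setTI; apply: mZ.
  rewrite -(setIT (Z @^-1` `]-oo, t[)) -integral_indic //.
by rewrite -e1 // step2 e1.
Qed.

Lemma ext d (T : measurableType d) (P : probability T R) d' (T' : measurableType d') (P' : probability T' R)
  (X : T -> R) (Y : T' -> R) :
  measurable_fun setT X -> measurable_fun setT Y ->
  (forall t, P (X @^-1` `]-oo, t[) = P' (Y @^-1` `]-oo, t[)) ->
  forall A : set R, measurable A -> P (X @^-1` A) = P' (Y @^-1` A).
Proof.
move=> mX mY h A mA.
have := @measure_unique _ R _ (@RGenInftyO.G R) (fun k : nat => `]-oo, k%:R[%classic) _ _ _ _
  (pushforward P X) (pushforward P' Y) _ _ A mA.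
apply.
- exact: RGenInftyO.measurableE.
- move=> B C [b ->] [c ->]; exists (Order.min b c).
  apply/seteqP; split => x /=; rewrite !in_itv /= ?lt_min.
    by move=> [-> ->].
  by move=> /andP[-> ->].
- by move=> i; exists i%:R.
- apply/seteqP; split => // x _.
  have [k hk] : exists k : nat, x < k%:R.
    exists (Num.bound `|x|); apply: le_lt_trans (ler_norm x) _.
    exact: archi_boundP.
  by exists k => //=; rewrite in_itv /= hk.
- by move=> B [b ->]; exact: h.
- move=> k; rewrite /pushforward (le_lt_trans (probability_le1 P _)) ?ltry //.
  by rewrite -[X in measurable X]setTI; apply: mX.
Qed.
End S.

Theorem mainTheorem5 (R : realType) (r : R) (k : nat) (beta gamma C : R)
  (d : measure_display) (T : measurableType d) (P : probability T R) (W : T -> R) :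
  0 < r < 1 -> (1 <= k)%N -> 0 < beta < 1 ->
  measurable_fun setT W ->
  (forall x, 0 < W x) ->
  (forall p : R, 0 <= p ->
     P.-integrable setT (fun x => (W x `^ p)%:E) /\
     (\int[P]_x (W x `^ p)%:E = (r `^ zeta_exp gamma C beta k p)%:E)%E) ->
  determined_by_moments P W.
Proof.
move=> /andP[r0 r1] k1 /andP[b0 b1] mW Wpos hW.
have mom : forall n : nat, P.-integrable setT (fun x => (W x ^+ n)%:E) /\
    (\int[P]_x (W x ^+ n)%:E = (r `^ zeta_exp gamma C beta k n%:R)%:E)%E.
  move=> n; have [i e] := hW n%:R (ler0n _ _).
  have ee : (fun x => (W x `^ n%:R)%:E) = (fun x => (W x ^+ n)%:E).
    by apply: funext => x; rewrite powR_mulrn // ltW.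
  by rewrite -ee.
pose M := r `^ gamma; pose K0 := r `^ (- `|C|).
have M0 : 0 < M by rewrite powR_gt0.
have hb : forall n, (\int[P]_x (W x ^+ (2*n))%:E <= (K0 * M ^+ (2*n))%:E)%E.
  move=> n; rewrite (proj2 (mom _)) lee_fin /zeta_exp.
  rewrite powRD; last by apply/implyP => _; rewrite gt_eqF.
  rewrite mulrC; apply: ler_pM; try exact: powR_ge0.
    apply: ger_powR; first by rewrite r0 ltW.
    set q := beta `^ _.
    have q0 : 0 <= q by exact: powR_ge0.
    have q1 : q <= 1.
      rewrite /q -[X in _ <= X](powRr0 beta); apply: ger_powR; first by rewrite b0 ltW.
      by rewrite divr_ge0.
    have c1 := ler_norm C; have c2 : - C <= `|C| by rewrite -normrN ler_norm.
    have h1 : 0 <= (C + `|C|) * (1 - q) by apply: mulr_ge0; lra.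
    have h2 : 0 <= `|C| * q by apply: mulr_ge0 => //; exact: normr_ge0.
    nra.
  by rewrite powRrM powR_mulrn // powR_ge0.
have aW := @bnd R _ _ P W K0 M mW M0 hb.
move=> d' T' P' V mV hV A mA.
have hbV : forall n, (\int[P']_x (V x ^+ (2*n))%:E <= (K0 * M ^+ (2*n))%:E)%E.
  by move=> n; rewrite (proj2 (hV (2*n)%N)); exact: hb.
have aV := @bnd R _ _ P' V K0 M mV M0 hbV.
apply: (@ext R _ _ P _ _ P' W V) => //.
apply: (@core R _ _ P _ _ P' W V (2 * M) mW mV aW aV).
- by move=> n; exact: (proj1 (mom n)).
- by move=> n; exact: (proj1 (hV n)).
- by move=> n; rewrite (proj2 (hV n)).
Qed.
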